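(* Let $l,r>1$ and $p_1,\dots,p_q>1$ be integers, $n=l\,p_1\cdots p_q\, r$, and $A\in\{0,1\}^{n\times n}$. Then $A$ admits all of the factorizations \[ (l,\;p_1p_2\cdots p_q r),\quad (p_1 l,\;p_2\cdots p_q r),\quad\dots,\quad (p_1p_2\cdots p_q l,\; r) \] (i.e. the $(p_1\cdots p_k l,\; p_{k+1}\cdots p_q r)$ factorization for every $k=0,\dots,q$) if and only if $A$ admits an $(l,p_1,p_2,\dots,p_q,r)$ factorization.
   Context: Kronecker products of binary matrices use Boolean arithmetic ($1+1=1$). For positive integers $n_1,\dots,n_m$ with $\prod n_i=n$, an $(n_1,\dots,n_m)$ factorization of $A\in\{0,1\}^{n\times n}$ is an expression $A=A_1\otimes\cdots\otimes A_m$ with $A_i\in\{0,1\}^{n_i\times n_i}$. *)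

(* Defs.v *)
From mathcomp Require Import all_boot all_order all_algebra.
Set Implicit Arguments. Unset Strict Implicit. Unset Printing Implicit Defensive.

(* Index splitting for the Kronecker product: row index i of an (m*k)-matrix
   corresponds to the pair (i %/ k, i %% k). *)
Lemma kron_div_lt m k (i : 'I_(m * k)) : i %/ k < m.
Proof.
case: k i => [|k] i; first by case: i => x; rewrite muln0.
by rewrite ltn_divLR // (ltn_ord i).
Qed.

Lemma kron_mod_lt m k (i : 'I_(m * k)) : i %% k < k.
Proof.
case: k i => [|k] i; first by case: i => x; rewrite muln0.
by rewrite ltn_pmod.
Qed.

(* Only products of entries occur, so Boolean arithmetic (1+1=1) plays no role. *)
Definition bkron m k (A : 'M[bool]_m) (B : 'M[bool]_k) : 'M[bool]_(m * k) :=
  \matrix_(i, j) (A (Ordinal (kron_div_lt i)) (Ordinal (kron_div_lt j))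
                  && B (Ordinal (kron_mod_lt i)) (Ordinal (kron_mod_lt j))).

(* has_fact [:: n_1; ...; n_m] n A  <->  A = A_1 (x) (A_2 (x) ( ... (x) A_m)) with
   A_i : 'M[bool]_(n_i)  (n = n_1 * ... * n_m).  The empty Kronecker product is the
   1 x 1 matrix [1]. *)
Fixpoint has_fact (ns : seq nat) (n : nat) (A : 'M[bool]_n) : Prop :=
  match ns with
  | [::] => exists e : 1 = n, A = castmx (e, e) (\matrix_(i, j) true)
  | n1 :: ns' =>
      exists (k : nat) (A1 : 'M[bool]_n1) (B : 'M[bool]_k) (e : n1 * k = n),
        has_fact ns' B /\ A = castmx (e, e) (bkron A1 B)
  end.

(* Main.v *)
Require Import Defs.
From mathcomp Require Import all_boot all_order all_algebra.
From mathcomp Require Import zify.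
Set Implicit Arguments. Unset Strict Implicit. Unset Printing Implicit Defensive.

Definition at_ n (A : 'M[bool]_n) (i j : nat) : bool :=
  match (insub i : option 'I_n), (insub j : option 'I_n) with
  | Some a, Some b => A a b
  | _, _ => false
  end.

Lemma atE n (A : 'M[bool]_n) (a b : 'I_n) : at_ A a b = A a b.
Proof. by rewrite /at_ !valK. Qed.

Lemma at_out n (A : 'M[bool]_n) i j : ~~ ((i < n) && (j < n)) -> at_ A i j = false.
Proof.
move=> H; rewrite /at_.
case: insubP => [a ha ea|] //; case: insubP => [b hb eb|] //.
by rewrite ha hb in H.
Qed.

Lemma at_mx n (h : nat -> nat -> bool) i j :
  at_ (\matrix_(a < n, b < n) h a b) i j = [&& i < n, j < n & h i j].
Proof.
case: (boolP ((i < n) && (j < n))) => [/andP[hi hj]|H].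
  have := atE (\matrix_(a < n, b < n) h a b) (Ordinal hi) (Ordinal hj).
  by rewrite mxE /= => ->; rewrite hi hj.
rewrite at_out //; move: H; by case: (i < n); case: (j < n).
Qed.

Lemma at_cast m n (e : m = n) (B : 'M[bool]_m) i j : at_ (castmx (e, e) B) i j = at_ B i j.
Proof. by case: n / e; rewrite castmx_id. Qed.

Lemma at_kron m k (X : 'M[bool]_m) (Y : 'M[bool]_k) i j :
  at_ (bkron X Y) i j = at_ X (i %/ k) (j %/ k) && at_ Y (i %% k) (j %% k).
Proof.
case: (boolP ((i < m * k) && (j < m * k))) => [/andP[hi hj]|H].
  have := atE (bkron X Y) (Ordinal hi) (Ordinal hj); rewrite /= => ->.
  rewrite mxE.
  have := atE X (Ordinal (kron_div_lt (Ordinal hi))) (Ordinal (kron_div_lt (Ordinal hj))).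
  rewrite /= => ->.
  have := atE Y (Ordinal (kron_mod_lt (Ordinal hi))) (Ordinal (kron_mod_lt (Ordinal hj))).
  by rewrite /= => ->.
rewrite at_out //.
case: k X Y H => [|k] X Y H.
  by rewrite [at_ Y _ _]at_out ?andbF // modn0 ltn0.
by rewrite [at_ X _ _]at_out // !ltn_divLR.
Qed.

Lemma at_inj n (A B : 'M[bool]_n) : (forall i j, at_ A i j = at_ B i j) -> A = B.
Proof. by move=> E; apply/matrixP => a b; rewrite -!atE. Qed.

Definition comb D i i' := i %/ D * D + i' %% D.
Definition rect D (f : nat -> nat -> bool) :=
  forall i j i' j', f i j -> f i' j' -> f (comb D i i') (comb D j j').

Lemma comb_shift D m m' u u' : 0 < D ->
  comb D (m * D + u) (m' * D + u') = m * D + comb D u u'.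
Proof. by move=> D0; rewrite /comb divnMDl // modnMDl mulnDl addnA. Qed.

Lemma comb_lt c D u u' : 0 < D -> u < c * D -> comb D u u' < c * D.
Proof.
rewrite /comb => D0 hu.
have hq : u %/ D < c by rewrite ltn_divLR.
apply: (@leq_trans (u %/ D * D + D)); first by rewrite ltn_add2l ltn_pmod.
by rewrite -mulSnr leq_mul2r hq orbT.
Qed.

Lemma rect_ext D f f' : (forall i j, f i j = f' i j) -> rect D f -> rect D f'.
Proof. by move=> E R i j i' j'; rewrite -!E; apply: R. Qed.

Lemma rect_kr_top K g h : 0 < K ->
  rect K (fun i j => g (i %/ K) (j %/ K) && h (i %% K) (j %% K)).
Proof.
move=> K0 i j i' j' /andP[g1 h1] /andP[g2 h2].
by rewrite /comb !divnMDl // !modnMDl !modn_mod !(divn_small (ltn_pmod _ K0)) !addn0 g1 h2.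
Qed.

Lemma rect_kr_sub K D g h : 0 < K -> 0 < D -> D %| K -> rect D h ->
  rect D (fun i j => g (i %/ K) (j %/ K) && h (i %% K) (j %% K)).
Proof.
move=> K0 D0 /dvdnP[c Kc] R i j i' j' /andP[g1 h1] /andP[g2 h2].
have E : forall x x', comb D x x' = x %/ K * K + comb D (x %% K) (x' %% K).
  move=> x x'.
  have -> : comb D x x' = comb D ((x %/ K * c) * D + x %% K) ((x' %/ K * c) * D + x' %% K).
    by rewrite -!mulnA -Kc -!divn_eq.
  by rewrite comb_shift // -mulnA -Kc.
have XL : forall x x', comb D (x %% K) (x' %% K) < K.
  by move=> x x'; rewrite Kc; apply: comb_lt => //; rewrite -Kc ltn_pmod.
rewrite (E i i') (E j j') !divnMDl // !modnMDl (divn_small (XL i i')) (divn_small (XL j j')).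
rewrite (modn_small (XL i i')) (modn_small (XL j j')) !addn0 g1 /=.
exact: R.
Qed.

Lemma rect_restrict K D h : 0 < D -> D %| K -> rect D h ->
  rect D (fun u v => [&& u < K, v < K & h u v]).
Proof.
move=> D0 /dvdnP[c Kc] R u v u' v' /and3P[hu hv h1] /and3P[_ _ h2].
apply/and3P; split; last exact: R.
  by rewrite Kc; apply: comb_lt => //; rewrite -Kc.
by rewrite Kc; apply: comb_lt => //; rewrite -Kc.
Qed.

Lemma rect_decomp N K (f : nat -> nat -> bool) : 0 < K ->
  (forall i j, f i j -> (i < N * K) && (j < N * K)) -> rect K f ->
  exists g h : nat -> nat -> bool,
    (forall i j, f i j = g (i %/ K) (j %/ K) && h (i %% K) (j %% K)) /\
    (forall D, 0 < D -> D %| K -> rect D f -> rect D h).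
Proof.
move=> K0 S R.
case: (boolP [exists a : 'I_(N * K), exists b : 'I_(N * K), f a b]).
  move=> /existsP[a /existsP[b fab]].
  exists (fun x y => f (x * K + a %% K) (y * K + b %% K)).
  exists (fun u v => f (a %/ K * K + u) (b %/ K * K + v)).
  split.
    move=> i j; apply/idP/andP.
      move=> fij; split; first exact: (R _ _ _ _ fij fab).
      exact: (R _ _ _ _ fab fij).
    case=> G H; have := R _ _ _ _ G H.
    rewrite /comb !divnMDl // !modnMDl !modn_mod !(divn_small (ltn_pmod _ K0)) !addn0.
    by rewrite -!divn_eq.
  move=> D D0 /dvdnP[c Kc] RD u v u' v' H1 H2.
  have := RD _ _ _ _ H1 H2.
  have EQ : forall x y y', comb D (x %/ K * K + y) (x %/ K * K + y') = x %/ K * K + comb D y y'.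
    by move=> x y y'; rewrite Kc mulnA comb_shift.
  by rewrite !EQ.
move=> NE; exists (fun _ _ => false), (fun _ _ => false); split; last first.
  by move=> D _ _ _ i j.
move=> i j; apply/negbTE/negP => fij.
move: NE => /negP; apply; have /andP[hi hj] := S _ _ fij.
by apply/existsP; exists (Ordinal hi); apply/existsP; exists (Ordinal hj).
Qed.

Lemma prod_gt0 (s : seq nat) : all (fun p => 0 < p) s -> 0 < \prod_(p <- s) p.
Proof.
elim: s => [|x s IH] /=; first by rewrite big_nil.
by case/andP=> hx hs; rewrite big_cons muln_gt0 hx IH.
Qed.

Lemma prod_take_drop k (s : seq nat) :
  \prod_(p <- take k s) p * \prod_(p <- drop k s) p = \prod_(p <- s) p.
Proof. by rewrite -big_cat cat_take_drop. Qed.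

Lemma has_fact_cons n1 ns n (A : 'M[bool]_n) :
  has_fact (n1 :: ns) A =
  exists (k : nat) (A1 : 'M[bool]_n1) (B : 'M[bool]_k) (e : n1 * k = n),
        has_fact ns B /\ A = castmx (e, e) (bkron A1 B).
Proof. by []. Qed.

Lemma Lmain ns : forall n (A : 'M[bool]_n), ns != [::] -> all (fun p => 0 < p) ns ->
  has_fact ns A <-> (n = \prod_(p <- ns) p /\
     forall k, 0 < k < size ns -> rect (\prod_(p <- drop k ns) p) (at_ A)).
Proof.
case: ns => [//|n1 ns].
elim: ns n1 => [|n2 ns IH] n1 n A _.
  move=> /andP[p1 _]; rewrite has_fact_cons; split.
    case=> k [A1 [B [e [[e' EB] EA]]]]; split.
      by rewrite -e -e' big_cons big_nil.
    move=> k' hk; exfalso; move: hk => /=; lia.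
  case=> hn _.
  have hn' : n = n1 * 1 by rewrite hn big_cons big_nil.
  clear hn; subst n.
  exists 1, (castmx (muln1 n1, muln1 n1) A), ((\matrix_(i, j) true)%R : 'M[bool]_1), erefl.
  split; first by exists erefl; rewrite castmx_id.
  apply: at_inj => i j.
  rewrite at_cast at_kron at_cast !divn1 !modn1.
  have -> : at_ (\matrix_(i, j) true : 'M[bool]_1)%R 0 0 = true by have := atE (\matrix_(i, j) true : 'M[bool]_1)%R ord0 ord0; rewrite mxE.
  by rewrite andbT.
move=> /andP[p1 pall]; rewrite has_fact_cons.
have K0 : 0 < \prod_(p <- n2 :: ns) p by apply: prod_gt0.
have DK : forall k, \prod_(p <- drop k (n2 :: ns)) p %| \prod_(p <- n2 :: ns) p.
  by move=> k; rewrite -(prod_take_drop k (n2 :: ns)); apply: dvdn_mull.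
have D0 : forall k, 0 < \prod_(p <- drop k (n2 :: ns)) p.
  by move=> k; apply: dvdn_gt0 (DK k).
split.
  case=> k [A1 [B [e [HB EA]]]].
  case: ((IH n2 k B isT pall).1 HB) => hk RB.
  subst k.
  have fA : forall i j, at_ A i j = at_ A1 (i %/ \prod_(p <- n2 :: ns) p) (j %/ \prod_(p <- n2 :: ns) p)
        && at_ B (i %% \prod_(p <- n2 :: ns) p) (j %% \prod_(p <- n2 :: ns) p).
    by move=> i j; rewrite EA at_cast at_kron.
  split; first by rewrite -e [in RHS]big_cons.
  move=> [|k] // /andP[_ hk] /=.
  case: k hk => [|k] hk.
    rewrite drop0; apply: rect_ext (rect_kr_top (g := at_ A1) (h := at_ B) K0) => i j.
    by rewrite fA.
  have hk' : 0 < k.+1 < size (n2 :: ns) by move: hk => /=; lia.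
  apply: rect_ext (rect_kr_sub (g := at_ A1) K0 (D0 k.+1) (DK k.+1) (RB k.+1 hk')).
  by move=> i j; rewrite fA.
case=> hn R.
have e : n1 * \prod_(p <- n2 :: ns) p = n by rewrite hn [in RHS]big_cons.
have S : forall i j, at_ A i j -> (i < n1 * \prod_(p <- n2 :: ns) p) && (j < n1 * \prod_(p <- n2 :: ns) p).
  move=> i j; case: (boolP ((i < n) && (j < n))) => [|H]; first by rewrite e.
  by rewrite at_out.
have R1 := R 1 isT; rewrite /= ?drop0 in R1.
have [g [h [Ef HD]]] := rect_decomp K0 S R1.
set K := \prod_(p <- n2 :: ns) p in e S Ef HD R1 K0 DK D0.
pose Y := ((\matrix_(u, v) h u v)%R : 'M[bool]_K).
pose X := ((\matrix_(a, b) g a b)%R : 'M[bool]_n1).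
have HY : has_fact (n2 :: ns) Y.
  apply: (IH n2 K Y isT pall).2; split; first by [].
  move=> k hk.
  apply: rect_ext (rect_restrict (D0 k) (DK k) _); first by move=> u v; rewrite at_mx.
  apply: HD (D0 k) (DK k) _.
  have hk2 : 0 < k.+1 < size (n1 :: n2 :: ns) by move: hk => /=; lia.
  exact: (R k.+1 hk2).
exists K, X, Y, e; split => //.
apply: at_inj => i j.
rewrite at_cast at_kron !at_mx Ef !ltn_pmod //.
case: (boolP ((i < n) && (j < n))) => [/andP[hi hj]|H].
  by rewrite !ltn_divLR // e hi hj.
have := Ef i j; rewrite at_out // => <-.
rewrite !ltn_divLR // e.
by move: H; case: (i < n); case: (j < n).
Qed.

Lemma L2 a b n (A : 'M[bool]_n) : 0 < a -> 0 < b ->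
  has_fact [:: a; b] A <-> (n = a * b /\ rect b (at_ A)).
Proof.
move=> a0 b0; rewrite (Lmain (ns := [:: a; b])) //; last by rewrite /= a0 b0.
split.
  case=> hn R; split; first by rewrite hn !big_cons big_nil muln1.
  by have := R 1 isT; rewrite /= big_cons big_nil muln1.
case=> hn R; split; first by rewrite hn !big_cons big_nil muln1.
move=> k hk; have -> : k = 1 by move: hk => /=; lia.
by rewrite /= big_cons big_nil muln1.
Qed.

Theorem corollary2 (l r : nat) (ps : seq nat) (n : nat) (A : 'M[bool]_n) :
  1 < l -> 1 < r -> 0 < size ps -> all (fun p => 1 < p) ps ->
  n = (l * \prod_(p <- ps) p * r)%N ->
  (forall k, k <= size ps ->
     has_fact [:: (\prod_(p <- take k ps) p * l)%N; (\prod_(p <- drop k ps) p * r)%N] A)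
  <-> has_fact (l :: ps ++ [:: r]) A.
Proof.
move=> hl hr _ hall hn.
have l0 : 0 < l by apply: ltnW.
have r0 : 0 < r by apply: ltnW.
have pall : all (fun p => 0 < p) ps by apply: sub_all hall => x; apply: ltnW.
have P0 : 0 < \prod_(p <- ps) p by apply: prod_gt0.
have PT : forall k, 0 < \prod_(p <- take k ps) p.
  by move=> k; apply: (dvdn_gt0 P0); rewrite -(prod_take_drop k ps); apply: dvdn_mulr.
have PD : forall k, 0 < \prod_(p <- drop k ps) p.
  by move=> k; apply: (dvdn_gt0 P0); rewrite -(prod_take_drop k ps); apply: dvdn_mull.
have Edrop : forall k, k <= size ps ->
    \prod_(p <- drop k.+1 (l :: ps ++ [:: r])) p = \prod_(p <- drop k ps) p * r.
  move=> k hk /=; rewrite drop_cat.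
  case: ltnP => hk'; first by rewrite big_cat big_seq1.
  have -> : k = size ps by apply/eqP; rewrite eqn_leq hk hk'.
  by rewrite subnn drop0 drop_size big_nil big_seq1 mul1n.
rewrite Lmain //; last by rewrite /= l0 all_cat pall /= r0.
split.
  move=> H; split.
    by rewrite hn big_cons big_cat big_seq1 mulnA.
  move=> [|k] // /andP[_ hk].
  have hk' : k <= size ps by move: hk; rewrite /= size_cat /=; lia.
  rewrite Edrop //.
  have a0 : 0 < \prod_(p <- take k ps) p * l by rewrite muln_gt0 PT l0.
  have b0 : 0 < \prod_(p <- drop k ps) p * r by rewrite muln_gt0 PD r0.
  by case: ((L2 A a0 b0).1 (H k hk')).
case=> _ R k hk.
apply/L2; rewrite ?muln_gt0 ?PT ?PD ?l0 ?r0 //; split.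
  rewrite hn -(prod_take_drop k ps); lia.
rewrite -Edrop //; apply: R.
by rewrite /= size_cat /=; lia.
Qed.
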